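(* Assume $W$ satisfies conditions (i), (ii) and (iv) below on $[0,T]$. Then for all $0\le t_0<t_1\le t_2<t_3\le T$, $$\lim_{n\to\infty}\sum_{j=\lfloor nt_0/2\rfloor+1}^{\lfloor nt_1/2\rfloor}\ \sum_{k=\lfloor nt_2/2\rfloor+1}^{\lfloor nt_3/2\rfloor}\Big|\beta_n(2j-1,2k-1)^2-\beta_n(2j-1,2k-2)^2-\beta_n(2j-2,2k-1)^2+\beta_n(2j-2,2k-2)^2\Big|=0.$$
   Context: $W=\{W_t,t\ge0\}$ is a centered Gaussian process with continuous covariance, and $\beta_n(j,k)=\mathbb E[(W_{(j+1)/n}-W_{j/n})(W_{(k+1)/n}-W_{k/n})]$. (The summand equals $|\langle\partial_{\frac{2j-1}{n}}^{\otimes2}-\partial_{\frac{2j-2}{n}}^{\otimes2},\partial_{\frac{2k-1}{n}}^{\otimes2}-\partial_{\frac{2k-2}{n}}^{\otimes2}\rangle_{\mathfrak H^{\otimes2}}|$ with $\partial_{j/n}=\mathbf 1_{[j/n,(j+1)/n]}$.) Conditions (constants may depend on $T$): (i) $\mathbb E[(W_t-W_{t-s})^2]\le C_1 s^{1/2}$ for $0<s\le t\le T$. (ii) There are $1<\alpha\le3/2$, $\beta=\frac32-\alpha$ such that for $s>0$, $2s\le r,t\le T$, $|t-r|\ge2s$: $|\mathbb E[(W_t-W_{t-s})(W_r-W_{r-s})]|\le C_1s^2|t-r|^{-\alpha}(t\wedge r-s)^{-\beta}+C_1s^2|t-r|^{-3/2}$. (iv) For $0<s\le t\le T-s$: $|\mathbb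 E[W_t(W_{t+s}-W_{t-s})]|\le C_3s^{1/2}$ if $t<2s$ and $\le C_3s(t-s)^{-1/2}$ if $t\ge2s$; for $0<s\le r\le T$: $|\mathbb E[W_r(W_{t+s}-W_{t-s})]|\le C_3s^{1/2}$ if $t<2s$ or $|t-r|<2s$, and $\le C_3s(t-s)^{-1/2}+C_3s|t-r|^{-1/2}$ if $t\ge2s$ and $|t-r|\ge2s$; and for $t>2s$: $|\mathbb E[W_s(W_t-W_{t-s})]|\le C_3s^{1/2+\gamma}(t-2s)^{-\gamma}$ for some $\gamma>0$. *)

(* Defs.v *)
From Stdlib Require Import Reals Lra List.
Open Scope R_scope.

(* A covariance function K s t = E[W_s W_t] of the process W on [0, oo). *)

Definition cov_symmetric (K : R -> R -> R) : Prop :=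
  forall s t, K s t = K t s.

(* Positive semidefinite on [0,oo): every finite family of times and
   real coefficients gives a nonnegative quadratic form.  Together with
   symmetry, this is exactly the condition for K to be the covariance of
   some centered Gaussian process indexed by t >= 0. *)
Definition cov_psd (K : R -> R -> R) : Prop :=
  forall (ts cs : list R), length ts = length cs ->
    Forall (fun t => 0 <= t) ts ->
    0 <= fold_right Rplus 0
           (map (fun p => fold_right Rplus 0
                    (map (fun q => fst p * fst q * K (snd p) (snd q))
                         (combine cs ts)))
                (combine cs ts)).

Definition cov_continuous (K : R -> R -> R) : Prop :=
  forall s t, 0 <= s -> 0 <= t -> forall eps, 0 < eps -> exists delta, 0 < delta /\
    forall s' t', 0 <= s' -> 0 <= t' -> Rabs (s' - s) < delta -> Rabs (t' - t) < delta ->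
      Rabs (K s' t' - K s t) < eps.

Definition gaussian_cov (K : R -> R -> R) : Prop :=
  cov_symmetric K /\ cov_psd K /\ cov_continuous K.

(* E[(W_a - W_b)(W_c - W_d)] *)
Definition covinc (K : R -> R -> R) (a b c d : R) : R :=
  K a c - K a d - K b c + K b d.

(* E[W_r (W_a - W_b)] *)
Definition covpt (K : R -> R -> R) (r a b : R) : R := K r a - K r b.

(* beta_n(j,k) = E[(W_{(j+1)/n} - W_{j/n})(W_{(k+1)/n} - W_{k/n})] *)
Definition beta (K : R -> R -> R) (n j k : nat) : R :=
  covinc K (INR (j+1) / INR n) (INR j / INR n) (INR (k+1) / INR n) (INR k / INR n).

Definition cond_i (K : R -> R -> R) (T C1 : R) : Prop :=
  forall s t, 0 < s -> s <= t -> t <= T ->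
    covinc K t (t - s) t (t - s) <= C1 * sqrt s.

Definition cond_ii (K : R -> R -> R) (T C1 alpha : R) : Prop :=
  let beta0 := 3/2 - alpha in
  forall s r t, 0 < s -> 2*s <= r -> r <= T -> 2*s <= t -> t <= T ->
    2*s <= Rabs (t - r) ->
    Rabs (covinc K t (t - s) r (r - s)) <=
      C1 * s^2 * Rpower (Rabs (t - r)) (- alpha) * Rpower (Rmin t r - s) (- beta0)
      + C1 * s^2 * Rpower (Rabs (t - r)) (- (3/2)).

Definition cond_iv (K : R -> R -> R) (T C3 gamma : R) : Prop :=
  (forall s t, 0 < s -> s <= t -> t <= T - s ->
     (t < 2*s -> Rabs (covpt K t (t + s) (t - s)) <= C3 * sqrt s) /\
     (2*s <= t -> Rabs (covpt K t (t + s) (t - s)) <= C3 * s * Rpower (t - s) (- (1/2))))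
  /\
  (forall s r t, 0 < s -> s <= r -> r <= T -> s <= t -> t <= T - s ->
     ((t < 2*s \/ Rabs (t - r) < 2*s) ->
        Rabs (covpt K r (t + s) (t - s)) <= C3 * sqrt s) /\
     ((2*s <= t /\ 2*s <= Rabs (t - r)) ->
        Rabs (covpt K r (t + s) (t - s)) <=
          C3 * s * Rpower (t - s) (- (1/2)) + C3 * s * Rpower (Rabs (t - r)) (- (1/2))))
  /\
  (forall s t, 0 < s -> 2*s < t -> t <= T ->
     Rabs (covpt K s t (t - s)) <= C3 * Rpower s (1/2 + gamma) * Rpower (t - 2*s) (- gamma)).

(* floor of a real, as a natural number (used for nonnegative arguments) *)
Definition nfloor (x : R) : nat := Z.to_nat (Int_part x).

(* sum_{i = lo}^{hi} f i  (empty if hi < lo) *)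
Fixpoint sum_from (lo : nat) (m : nat) (f : nat -> R) : R :=
  match m with
  | O => 0
  | S m' => f lo + sum_from (S lo) m' f
  end.
Definition sum_range (lo hi : nat) (f : nat -> R) : R :=
  sum_from lo (S hi - lo) f.

Definition summand (K : R -> R -> R) (n j k : nat) : R :=
  Rabs (beta K n (2*j-1) (2*k-1) ^ 2 - beta K n (2*j-1) (2*k-2) ^ 2
        - beta K n (2*j-2) (2*k-1) ^ 2 + beta K n (2*j-2) (2*k-2) ^ 2).

Definition double_sum (K : R -> R -> R) (t0 t1 t2 t3 : R) (n : nat) : R :=
  sum_range (nfloor (INR n * t0 / 2) + 1) (nfloor (INR n * t1 / 2)) (fun j =>
    sum_range (nfloor (INR n * t2 / 2) + 1) (nfloor (INR n * t3 / 2)) (fun k =>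
      summand K n j k)).

(* Main.v *)
Require Import Defs.
From Stdlib Require Import Reals Lra Lia List ZArith.
Open Scope R_scope.

Fixpoint sm (N : nat) (f : nat -> R) : R :=
  match N with O => 0 | S N' => sm N' f + f N' end.

Lemma sm_ext N f g : (forall i, (i < N)%nat -> f i = g i) -> sm N f = sm N g.
Proof.
  induction N; simpl; intros H; [reflexivity|].
  rewrite IHN by (intros; apply H; lia). rewrite H by lia. reflexivity.
Qed.

Lemma sm_le N f g : (forall i, (i < N)%nat -> f i <= g i) -> sm N f <= sm N g.
Proof.
  induction N; simpl; intros H; [lra|].
  assert (sm N f <= sm N g) by (apply IHN; intros; apply H; lia).
  assert (f N <= g N) by (apply H; lia). lra.
Qed.

Lemma sm_nonneg N f : (forall i, (i < N)%nat -> 0 <= f i) -> 0 <= sm N f.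
Proof.
  intros H. replace 0 with (sm N (fun _ => 0)).
  - apply sm_le; auto.
  - induction N; simpl; [reflexivity| rewrite IHN; [lra|intros; apply H; lia]].
Qed.

Lemma sm_plus N f g : sm N (fun i => f i + g i) = sm N f + sm N g.
Proof. induction N; simpl; [lra| rewrite IHN; lra]. Qed.

Lemma sm_scal N c f : sm N (fun i => c * f i) = c * sm N f.
Proof. induction N; simpl; [lra| rewrite IHN; lra]. Qed.

Lemma sm_zero N : sm N (fun _ => 0) = 0.
Proof. induction N; simpl; [lra| rewrite IHN; lra]. Qed.

Lemma sm_shift N f : sm (S N) f = f O + sm N (fun i => f (S i)).
Proof.
  induction N; simpl in *; [lra|]. rewrite IHN. lra.
Qed.

Lemma sm_app N M f : sm (N + M) f = sm N f + sm M (fun i => f (N + i)%nat).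
Proof.
  induction M; simpl.
  - rewrite Nat.add_0_r. lra.
  - rewrite Nat.add_succ_r. simpl. rewrite IHM. lra.
Qed.

Lemma sm_mono_len N M f : (N <= M)%nat -> (forall i, (i < M)%nat -> 0 <= f i) ->
  sm N f <= sm M f.
Proof.
  intros H Hf. replace M with (N + (M - N))%nat by lia. rewrite sm_app.
  assert (0 <= sm (M - N) (fun i => f (N + i)%nat)).
  { apply sm_nonneg. intros; apply Hf; lia. } lra.
Qed.

Lemma sm_rev N f : sm N f = sm N (fun i => f (N - 1 - i)%nat).
Proof.
  induction N; [reflexivity|].
  rewrite (sm_shift N (fun i => f (S N - 1 - i)%nat)).
  change (sm (S N) f) with (sm N f + f N). rewrite IHN.
  replace (S N - 1 - 0)%nat with N by lia.
  rewrite (sm_ext N (fun i => f (N - 1 - i)%nat) (fun i => f (S N - 1 - S i)%nat)).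
  - lra.
  - intros; f_equal; lia.
Qed.

Lemma sm_swap N M (f : nat -> nat -> R) :
  sm N (fun i => sm M (fun j => f i j)) = sm M (fun j => sm N (fun i => f i j)).
Proof.
  induction N; simpl.
  - rewrite sm_zero; reflexivity.
  - rewrite IHN, <- sm_plus. reflexivity.
Qed.

Lemma sm_abs N f : Rabs (sm N f) <= sm N (fun i => Rabs (f i)).
Proof.
  induction N; simpl. rewrite Rabs_R0; lra.
  eapply Rle_trans; [apply Rabs_triang|]. lra.
Qed.

Lemma sum_from_sm lo m f : sum_from lo m f = sm m (fun i => f (lo + i)%nat).
Proof.
  revert lo; induction m; intros lo; [reflexivity|].
  cbn [sum_from]. rewrite IHm. rewrite (sm_shift m). rewrite Nat.add_0_r.
  rewrite (sm_ext m (fun i => f (S lo + i)%nat) (fun i => f (lo + S i)%nat)).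
  reflexivity. intros; f_equal; lia.
Qed.

Lemma sq_tele L : forall d, 1 <= d ->
  sm L (fun i => / (d + INR i) ^ 2) <= 2 / d.
Proof.
  induction L; intros d Hd.
  - simpl. apply Rlt_le. apply Rdiv_lt_0_compat; lra.
  - rewrite sm_shift.
    rewrite (sm_ext L _ (fun i => / ((d+1) + INR i) ^ 2)).
    2:{ intros i _. rewrite S_INR. f_equal. f_equal. ring. }
    specialize (IHL (d+1) ltac:(lra)).
    simpl INR. rewrite Rplus_0_r.
    assert (/ d ^ 2 + 2 / (d + 1) <= 2 / d).
    { assert (/ d ^ 2 + 2 / (d + 1) - 2/d = (1 - d) / (d^2 * (d+1))) by (field; lra).
      assert ((1 - d) / (d^2 * (d+1)) <= 0).
      { unfold Rdiv. assert (0 < / (d^2 * (d+1))).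
        { apply Rinv_0_lt_compat. apply Rmult_lt_0_compat; [apply pow_lt|]; lra. }
        nra. } lra. }
    lra.
Qed.

Lemma harm_sqrt L : sm L (fun i => / (INR i + 1)) <= 2 * sqrt (INR L).
Proof.
  induction L.
  - simpl. rewrite sqrt_0. lra.
  - simpl sm. rewrite S_INR.
    set (a := sqrt (INR L)) in *. set (b := sqrt (INR L + 1)) in *.
    assert (Ha : 0 <= a) by apply sqrt_pos.
    assert (HL : 0 <= INR L) by apply pos_INR.
    assert (Hb2 : b * b = INR L + 1) by (apply sqrt_sqrt; lra).
    assert (Ha2 : a * a = INR L) by (apply sqrt_sqrt; lra).
    assert (Hb1 : 1 <= b).
    { unfold b. rewrite <- sqrt_1 at 1. apply sqrt_le_1_alt. lra. }
    assert (Hab : a <= b).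
    { unfold a, b. apply sqrt_le_1_alt. lra. }
    assert (/ (INR L + 1) <= 2 * (b - a)).
    { rewrite <- Hb2. 
      assert (E1 : (b - a) * (b + a) = 1) by nra.
      assert (E2 : 2 * (b - a) * (b * b) >= (b - a) * (b + a) * b).
      { assert (0 <= b - a) by lra. assert (0 <= (b-a) * b) by nra. nra. }
      assert (2 * (b - a) * (b * b) >= 1) by nra.
      assert (0 < b * b) by nra.
      apply (Rmult_le_reg_r (b*b)); [lra|].
      rewrite Rinv_l by lra. lra. }
    lra.
Qed.

Section Bil.
Variable K : R -> R -> R.

Definition inner (p : R * R) (P : list (R * R)) : R :=
  fold_right Rplus 0 (map (fun q => fst p * fst q * K (snd p) (snd q)) P).
Definition bil (P1 P2 : list (R * R)) : R :=
  fold_right Rplus 0 (map (fun p => inner p P2) P1).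

Lemma fr_app (l1 l2 : list R) :
  fold_right Rplus 0 (l1 ++ l2) = fold_right Rplus 0 l1 + fold_right Rplus 0 l2.
Proof. induction l1; simpl; [lra| rewrite IHl1; lra]. Qed.

Lemma inner_app p P P' : inner p (P ++ P') = inner p P + inner p P'.
Proof. unfold inner. rewrite map_app, fr_app. reflexivity. Qed.

Lemma bil_app_l P1 P1' P2 : bil (P1 ++ P1') P2 = bil P1 P2 + bil P1' P2.
Proof. unfold bil. rewrite map_app, fr_app. reflexivity. Qed.

Lemma bil_app_r P1 P2 P2' : bil P1 (P2 ++ P2') = bil P1 P2 + bil P1 P2'.
Proof.
  unfold bil. induction P1; simpl; [lra|]. rewrite IHP1, inner_app. lra.
Qed.

Variables (mu u v : nat -> R).
Definition block (i : nat) : list (R * R) := (mu i, u i) :: (- mu i, v i) :: nil.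
Fixpoint gen (N : nat) : list (R * R) :=
  match N with O => nil | S N' => gen N' ++ block N' end.

Lemma bil_block i j : bil (block i) (block j) = mu i * mu j * covinc K (u i) (v i) (u j) (v j).
Proof. unfold bil, inner, block, covinc; simpl. ring. Qed.

Lemma bil_gen_r P M : bil P (gen M) = sm M (fun j => bil P (block j)).
Proof.
  induction M; simpl.
  - unfold bil. induction P; simpl; [lra|]. rewrite IHP. unfold inner; simpl. lra.
  - rewrite bil_app_r, IHM. reflexivity.
Qed.

Lemma bil_gen N M : bil (gen N) (gen M) = sm N (fun i => sm M (fun j => bil (block i) (block j))).
Proof.
  induction N; simpl.
  - reflexivity.
  - rewrite bil_app_l, IHN, bil_gen_r. reflexivity.
Qed.

Lemma combine_map (P : list (R * R)) : combine (map fst P) (map snd P) = P.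
Proof. induction P as [|[x y] P IH]; simpl; [reflexivity| rewrite IH; reflexivity]. Qed.

Lemma gen_nonneg N : (forall i, 0 <= u i /\ 0 <= v i) ->
  Forall (fun t => 0 <= t) (map snd (gen N)).
Proof.
  intros H. induction N; simpl; [constructor|].
  rewrite map_app. apply Forall_app; split; auto.
  simpl. destruct (H N). constructor; [auto| constructor; [auto| constructor]].
Qed.

Lemma var_nonneg N : cov_psd K -> (forall i, 0 <= u i /\ 0 <= v i) ->
  0 <= sm N (fun i => sm N (fun j => mu i * mu j * covinc K (u i) (v i) (u j) (v j))).
Proof.
  intros Hpsd Hpos.
  pose proof (Hpsd (map snd (gen N)) (map fst (gen N))) as Hq.
  rewrite !length_map in Hq. specialize (Hq eq_refl (gen_nonneg N Hpos)).
  rewrite combine_map in Hq. change (0 <= bil (gen N) (gen N)) in Hq.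
  rewrite bil_gen in Hq.
  erewrite sm_ext; [exact Hq|]. intros i _. apply sm_ext. intros j _.
  rewrite bil_block. reflexivity.
Qed.
End Bil.

Lemma exp_le' x y : x <= y -> exp x <= exp y.
Proof. intros [H|H]; [apply Rlt_le, exp_increasing; auto| subst; lra]. Qed.

Lemma ln_le' x y : 0 < x -> x <= y -> ln x <= ln y.
Proof. intros Hx [H|H]; [apply Rlt_le, ln_increasing; auto| subst; lra]. Qed.

Lemma rp_bound s m y al : 0 < s -> 1 <= m -> s <= y -> 1 <= al -> al <= 3/2 ->
  s ^ 2 * Rpower (m * s) (- al) * Rpower y (- (3/2 - al)) <= sqrt s / m.
Proof.
  intros Hs Hm Hy Ha1 Ha2.
  assert (Hm0 : 0 < m) by lra.
  unfold Rpower. rewrite ln_mult by lra.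
  rewrite <- Rpower_sqrt by lra. unfold Rpower.
  replace (s ^ 2) with (exp (2 * ln s)).
  2:{ replace (2 * ln s) with (ln s + ln s) by ring. rewrite exp_plus, exp_ln by lra. ring. }
  unfold Rdiv.
  replace (/ m) with (exp (- ln m)) by (rewrite <- ln_Rinv, exp_ln; [reflexivity| | ]; try apply Rinv_0_lt_compat; lra).
  rewrite <- !exp_plus. apply exp_le'.
  assert (Hl : ln s <= ln y) by (apply ln_le'; lra).
  assert (Hlm : 0 <= ln m) by (rewrite <- ln_1; apply ln_le'; lra).
  nra.
Qed.

Lemma rp_bound2 s m : 0 < s -> 1 <= m ->
  s ^ 2 * Rpower (m * s) (- (3/2)) <= sqrt s / m.
Proof.
  intros Hs Hm.
  pose proof (rp_bound s m s (3/2) Hs Hm (Rle_refl _) ltac:(lra) ltac:(lra)) as H.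
  replace (- (3/2 - 3/2)) with 0 in H by ring. rewrite Rpower_O in H by lra. lra.
Qed.

Section Beta.
Variables (K : R -> R -> R) (n : nat) (Hn : (1 <= n)%nat).
Variables (T C1 alpha : R).
Hypothesis (hsym : cov_symmetric K) (hpsd : cov_psd K).
Hypothesis (hC1 : 0 < C1) (halpha : 1 < alpha /\ alpha <= 3/2).
Hypothesis (hi : cond_i K T C1) (hii : cond_ii K T C1 alpha).

Let s := / INR n.
Lemma INRn_pos : 0 < INR n.
Proof. apply lt_0_INR. lia. Qed.
Lemma s_pos : 0 < s.
Proof. unfold s. apply Rinv_0_lt_compat, INRn_pos. Qed.

Lemma beta_sym a c : beta K n a c = beta K n c a.
Proof. unfold beta, covinc. rewrite !(hsym (INR (a+1) / INR n)), !(hsym (INR a / INR n)). ring. Qed.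

Lemma var_beta N (mu : nat -> R) (idx : nat -> nat) :
  0 <= sm N (fun i => sm N (fun j => mu i * mu j * beta K n (idx i) (idx j))).
Proof.
  apply (var_nonneg K mu (fun i => INR (idx i + 1) / INR n) (fun i => INR (idx i) / INR n) N hpsd).
  intros i. pose proof INRn_pos. split; unfold Rdiv; apply Rmult_le_pos; try apply pos_INR; left; apply Rinv_0_lt_compat; lra.
Qed.

Lemma beta_diag_nonneg a : 0 <= beta K n a a.
Proof.
  pose proof (var_beta 1 (fun _ => 1) (fun _ => a)). simpl in H. lra.
Qed.

Lemma beta_cs a c : Rabs (beta K n a c) <= (beta K n a a + beta K n c c) / 2.
Proof.
  pose proof (var_beta 2 (fun i => if Nat.eqb i 0 then 1 else 1) (fun i => if Nat.eqb i 0 then a else c)) as H1.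
  pose proof (var_beta 2 (fun i => if Nat.eqb i 0 then 1 else -1) (fun i => if Nat.eqb i 0 then a else c)) as H2.
  simpl in H1, H2. rewrite (beta_sym c a) in H1, H2.
  unfold Rabs; destruct (Rcase_abs _); lra.
Qed.

Lemma tm_sub a : INR (a + 1) / INR n - s = INR a / INR n.
Proof. unfold s. rewrite plus_INR. simpl. pose proof INRn_pos. field. lra. Qed.

Lemma beta_diag_le a : INR (a + 1) / INR n <= T -> beta K n a a <= C1 * sqrt s.
Proof.
  intros HT. pose proof INRn_pos as Hn0.
  pose proof (hi s (INR (a+1) / INR n) s_pos) as H.
  rewrite tm_sub in H. apply H; auto.
  unfold s. rewrite plus_INR. simpl. unfold Rdiv.
  rewrite Rmult_plus_distr_r, Rmult_1_l.
  assert (0 <= INR a * / INR n) by (apply Rmult_le_pos; [apply pos_INR| left; apply Rinv_0_lt_compat; lra]).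
  lra.
Qed.

Lemma beta_abs_le a c : INR (a + 1) / INR n <= T -> INR (c + 1) / INR n <= T ->
  Rabs (beta K n a c) <= C1 * sqrt s.
Proof.
  intros Ha Hc. eapply Rle_trans; [apply beta_cs|].
  pose proof (beta_diag_le a Ha). pose proof (beta_diag_le c Hc). lra.
Qed.

Lemma tm_mono a c : (a <= c)%nat -> INR a / INR n <= INR c / INR n.
Proof.
  intros H. pose proof INRn_pos. unfold Rdiv. apply Rmult_le_compat_r.
  left; apply Rinv_0_lt_compat; lra. apply le_INR; auto.
Qed.

Lemma beta_far a c : (1 <= a)%nat -> (a + 2 <= c)%nat -> INR (c + 1) / INR n <= T ->
  Rabs (beta K n a c) <= 2 * C1 * sqrt s / INR (c - a).
Proof.
  intros Ha Hac HT. pose proof INRn_pos as Hn0. pose proof s_pos as Hs.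
  set (t := INR (a + 1) / INR n). set (r := INR (c + 1) / INR n).
  assert (Hm : INR (c - a) >= 2).
  { replace 2 with (INR 2) by (simpl; ring). apply Rle_ge, le_INR. lia. }
  assert (Htr : Rabs (t - r) = INR (c - a) * s).
  { unfold t, r, s. rewrite Rabs_minus_sym, Rabs_right.
    - rewrite minus_INR by lia. rewrite !plus_INR. field. lra.
    - apply Rge_minus, Rle_ge, tm_mono. lia. }
  assert (Hmin : Rmin t r - s = INR a / INR n).
  { rewrite Rmin_left. apply tm_sub. apply tm_mono; lia. }
  assert (H2s : 2 * s <= t).
  { unfold t, s. replace (2 * / INR n) with (INR 2 / INR n) by (simpl; field; lra).
    apply tm_mono. lia. }
  assert (Htr2 : t <= r) by (apply tm_mono; lia).
  assert (HT' : r <= T) by exact HT.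
  pose proof (hii s r t Hs ltac:(lra) HT' H2s ltac:(lra)) as H.
  rewrite Htr, Hmin in H. unfold t, r in H.
  rewrite !tm_sub in H. fold (beta K n a c) in H.
  assert (Hb : 2 * s <= INR (c - a) * s) by nra.
  specialize (H Hb).
  assert (Hy : s <= INR a / INR n).
  { unfold s. replace (/ INR n) with (INR 1 / INR n) by (simpl; field; lra). apply tm_mono. lia. }
  pose proof (rp_bound s (INR (c - a)) (INR a / INR n) alpha Hs ltac:(lra) Hy ltac:(lra) ltac:(lra)) as B1.
  pose proof (rp_bound2 s (INR (c - a)) Hs ltac:(lra)) as B2.
  assert (E : 2 * C1 * sqrt s / INR (c - a) = C1 * (sqrt s / INR (c - a)) + C1 * (sqrt s / INR (c - a))) by (field; lra).
  rewrite E. eapply Rle_trans; [exact H|].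
  apply Rplus_le_compat.
  - replace (C1 * s ^ 2 * Rpower (INR (c - a) * s) (- alpha) * Rpower (INR a / INR n) (- (3 / 2 - alpha)))
      with (C1 * (s ^ 2 * Rpower (INR (c - a) * s) (- alpha) * Rpower (INR a / INR n) (- (3 / 2 - alpha)))) by ring.
    apply Rmult_le_compat_l; lra.
  - replace (C1 * s ^ 2 * Rpower (INR (c - a) * s) (- (3/2)))
      with (C1 * (s ^ 2 * Rpower (INR (c - a) * s) (- (3/2)))) by ring.
    apply Rmult_le_compat_l; lra.
Qed.
End Beta.

Section Beta2.
Variables (K : R -> R -> R) (n : nat) (Hn : (1 <= n)%nat).
Variables (T C1 alpha : R).
Hypothesis (hsym : cov_symmetric K) (hpsd : cov_psd K).
Hypothesis (hC1 : 0 < C1) (halpha : 1 < alpha /\ alpha <= 3/2).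
Hypothesis (hi : cond_i K T C1) (hii : cond_ii K T C1 alpha).

Lemma beta_unif a c : (1 <= a)%nat -> (a <= c)%nat -> INR (c + 1) / INR n <= T ->
  Rabs (beta K n a c) <= 4 * C1 * sqrt (/ INR n) / (INR (c - a) + 1).
Proof.
  intros Ha Hac HT. pose proof (INRn_pos n Hn) as Hn0.
  assert (Hsq : 0 <= sqrt (/ INR n)) by apply sqrt_pos.
  assert (HTa : INR (a + 1) / INR n <= T).
  { eapply Rle_trans; [apply (tm_mono n Hn (a+1) (c+1)); lia| exact HT]. }
  destruct (Nat.le_gt_cases (a + 2) c) as [Hf|Hf].
  - pose proof (beta_far K n Hn T C1 alpha hC1 halpha hii a c Ha Hf HT) as H.
    assert (Hm : INR (c - a) >= 2).
    { replace 2 with (INR 2) by (simpl; ring). apply Rle_ge, le_INR. lia. }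
    eapply Rle_trans; [exact H|].
    set (m := INR (c - a)) in *. set (q := sqrt (/ INR n)) in *.
    assert (Hinv : / m <= / ((m + 1) / 2)) by (apply Rinv_le_contravar; lra).
    replace (/ ((m + 1) / 2)) with (2 * / (m + 1)) in Hinv by (field; lra).
    unfold Rdiv. assert (0 <= C1 * q) by nra. nra.
  - pose proof (beta_abs_le K n Hn T C1 hsym hpsd hi a c HTa HT) as H.
    assert (Hm : INR (c - a) <= 1).
    { replace 1 with (INR 1) by (simpl; ring). apply le_INR. lia. }
    assert (Hm0 : 0 <= INR (c - a)) by apply pos_INR.
    eapply Rle_trans; [exact H|].
    set (m := INR (c - a)) in *. set (q := sqrt (/ INR n)) in *.
    assert (Hinv : / 2 <= / (m + 1)) by (apply Rinv_le_contravar; lra).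
    unfold Rdiv. assert (0 <= C1 * q) by nra. nra.
Qed.

Definition ndist (i j : nat) : nat := ((i - j) + (j - i))%nat.

Lemma beta_gram a c : (1 <= a)%nat -> (1 <= c)%nat -> INR (a + 1) / INR n <= T ->
  INR (c + 1) / INR n <= T ->
  Rabs (beta K n a c) <= 4 * C1 * sqrt (/ INR n) / (INR (ndist a c) + 1).
Proof.
  intros Ha Hc HTa HTc. unfold ndist.
  destruct (Nat.le_gt_cases a c).
  - replace (a - c + (c - a))%nat with (c - a)%nat by lia.
    apply beta_unif; auto.
  - replace (a - c + (c - a))%nat with (a - c)%nat by lia.
    rewrite (beta_sym K n hsym). apply beta_unif; auto; lia.
Qed.
End Beta2.

Lemma dist_sum L i : (i < L)%nat ->
  sm L (fun j => / (INR (ndist i j) + 1)) <= 2 * sm L (fun j => / (INR j + 1)).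
Proof.
  intros Hi.
  assert (Hpos : forall j, 0 <= / (INR j + 1)).
  { intros j. left. apply Rinv_0_lt_compat. pose proof (pos_INR j). lra. }
  replace L with (i + (L - i))%nat at 1 by lia. rewrite sm_app.
  assert (A : sm i (fun j => / (INR (ndist i j) + 1)) <= sm L (fun j => / (INR j + 1))).
  { rewrite sm_rev. eapply Rle_trans; [|apply (sm_mono_len i L); [lia| intros; apply Hpos]].
    apply sm_le. intros j Hj. unfold ndist.
    replace (i - (i - 1 - j) + (i - 1 - j - i))%nat with (S j) by lia.
    rewrite S_INR. apply Rinv_le_contravar; [pose proof (pos_INR j); lra| lra]. }
  assert (B : sm (L - i) (fun j => / (INR (ndist i (i + j)) + 1)) <= sm L (fun j => / (INR j + 1))).
  { eapply Rle_trans; [|apply (sm_mono_len (L - i) L); [lia| intros; apply Hpos]].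
    apply sm_le. intros j Hj. unfold ndist.
    replace (i - (i + j) + (i + j - i))%nat with j by lia. lra. }
  lra.
Qed.

Lemma schur L (y : nat -> R) (G : nat -> nat -> R) Lam :
  (forall i, (i < L)%nat -> sm L (fun j => Rabs (G i j)) <= Lam) ->
  (forall j, (j < L)%nat -> sm L (fun i => Rabs (G i j)) <= Lam) ->
  sm L (fun i => sm L (fun j => y i * y j * G i j)) <= Lam * sm L (fun i => y i ^ 2).
Proof.
  intros HR HC.
  apply Rle_trans with (sm L (fun i => sm L (fun j => y i ^ 2 / 2 * Rabs (G i j) + y j ^ 2 / 2 * Rabs (G i j)))).
  { apply sm_le. intros i _. apply sm_le. intros j _.
    assert (E : y i * y j * G i j <= Rabs (y i) * Rabs (y j) * Rabs (G i j)).
    { rewrite <- !Rabs_mult. apply Rle_abs. }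
    assert (Ei : y i ^ 2 = Rabs (y i) ^ 2) by (rewrite pow2_abs; reflexivity).
    assert (Ej : y j ^ 2 = Rabs (y j) ^ 2) by (rewrite pow2_abs; reflexivity).
    rewrite Ei, Ej. pose proof (Rabs_pos (y i)). pose proof (Rabs_pos (y j)).
    pose proof (Rabs_pos (G i j)).
    assert (0 <= (Rabs (y i) - Rabs (y j))^2 * Rabs (G i j)) by (apply Rmult_le_pos; [apply pow2_ge_0| auto]).
    nra. }
  rewrite (sm_ext L _ (fun i => sm L (fun j => y i ^ 2 / 2 * Rabs (G i j)) + sm L (fun j => y j ^ 2 / 2 * Rabs (G i j)))).
  2:{ intros; apply sm_plus. }
  rewrite sm_plus. rewrite (sm_swap L L (fun i j => y j ^ 2 / 2 * Rabs (G i j))).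
  assert (A : sm L (fun i => sm L (fun j => y i ^ 2 / 2 * Rabs (G i j))) <= Lam / 2 * sm L (fun i => y i ^ 2)).
  { rewrite <- sm_scal. apply sm_le. intros i Hi. rewrite sm_scal.
    pose proof (HR i Hi). assert (0 <= y i ^ 2) by apply pow2_ge_0. nra. }
  assert (B : sm L (fun j => sm L (fun i => y j ^ 2 / 2 * Rabs (G i j))) <= Lam / 2 * sm L (fun i => y i ^ 2)).
  { rewrite <- sm_scal. apply sm_le. intros j Hj. rewrite sm_scal.
    pose proof (HC j Hj). assert (0 <= y j ^ 2) by apply pow2_ge_0. nra. }
  lra.
Qed.

Lemma bessel_abs L (x : R) (y : nat -> R) (G : nat -> nat -> R) Lam :
  (forall lam, 0 <= x - 2 * lam * sm L (fun i => y i ^ 2)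
                 + lam ^ 2 * sm L (fun i => sm L (fun j => y i * y j * G i j))) ->
  0 < Lam ->
  (forall i, (i < L)%nat -> sm L (fun j => Rabs (G i j)) <= Lam) ->
  (forall j, (j < L)%nat -> sm L (fun i => Rabs (G i j)) <= Lam) ->
  sm L (fun i => y i ^ 2) <= Lam * x.
Proof.
  intros Hv HL HR HC.
  pose proof (schur L y G Lam HR HC) as HS.
  set (Y := sm L (fun i => y i ^ 2)) in *.
  set (Q := sm L (fun i => sm L (fun j => y i * y j * G i j))) in *.
  specialize (Hv (/ Lam)).
  assert (Hq : (/ Lam) ^ 2 * Q <= (/ Lam) ^ 2 * (Lam * Y)).
  { apply Rmult_le_compat_l; [apply pow2_ge_0| exact HS]. }
  replace ((/ Lam) ^ 2 * (Lam * Y)) with (/ Lam * Y) in Hq by (field; lra).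
  assert (H1 : 0 <= x - / Lam * Y) by lra.
  apply (Rmult_le_compat_l Lam) in H1; [|lra].
  replace (Lam * (x - / Lam * Y)) with (Lam * x - Y) in H1 by (field; lra). lra.
Qed.

Lemma bessel_var K n (Hn : (1 <= n)%nat) (hsym : cov_symmetric K) (hpsd : cov_psd K) C0 L lam :
  0 <= beta K n 0 0 - 2 * lam * sm L (fun i => beta K n 0 (C0 + i) ^ 2)
       + lam ^ 2 * sm L (fun i => sm L (fun j => beta K n 0 (C0 + i) * beta K n 0 (C0 + j) * beta K n (C0 + i) (C0 + j))).
Proof.
  pose proof (var_beta K n Hn hpsd (S L)
     (fun i => match i with O => 1 | S i' => - lam * beta K n 0 (C0 + i') end)
     (fun i => match i with O => O | S i' => (C0 + i')%nat end)) as H.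
  rewrite sm_shift in H. cbn beta iota in H.
  rewrite sm_shift in H. cbn beta iota in H.
  rewrite (sm_ext L (fun i => sm (S L) _) (fun i => (- lam * beta K n 0 (C0 + i)) * 1 * beta K n (C0 + i) 0 +
     sm L (fun j => (- lam * beta K n 0 (C0 + i)) * (- lam * beta K n 0 (C0 + j)) * beta K n (C0 + i) (C0 + j)))) in H.
  2:{ intros i _. rewrite sm_shift. reflexivity. }
  rewrite sm_plus in H.
  rewrite (sm_ext L (fun i => - lam * beta K n 0 (C0 + i) * 1 * beta K n (C0 + i) 0)
            (fun i => (- lam) * beta K n 0 (C0 + i) ^ 2)) in H.
  2:{ intros i _. rewrite (beta_sym K n hsym (C0 + i) 0). ring. }
  rewrite (sm_ext L (fun j => 1 * (- lam * beta K n 0 (C0 + j)) * beta K n 0 (C0 + j))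
            (fun i => (- lam) * beta K n 0 (C0 + i) ^ 2)) in H.
  2:{ intros i _. ring. }
  rewrite (sm_ext L (fun i => sm L (fun j => (- lam * beta K n 0 (C0 + i)) * (- lam * beta K n 0 (C0 + j)) * beta K n (C0 + i) (C0 + j))) 
     (fun i => lam ^ 2 * sm L (fun j => beta K n 0 (C0 + i) * beta K n 0 (C0 + j) * beta K n (C0 + i) (C0 + j)))) in H.
  2:{ intros i _. rewrite <- sm_scal. apply sm_ext. intros; ring. }
  rewrite !sm_scal in H. lra.
Qed.

Lemma sm_S N f : sm (S N) f = sm N f + f N.
Proof. reflexivity. Qed.

Lemma regroup (g : nat -> R) N M :
  sm M (fun l => g (2 * (N + 1 + l) - 1)%nat + g (2 * (N + 1 + l) - 2)%nat)
  = sm (2 * M) (fun i => g (2 * N + i)%nat).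
Proof.
  induction M.
  - reflexivity.
  - replace (2 * S M)%nat with (S (S (2 * M))) by lia.
    rewrite !sm_S. rewrite IHM.
    replace (2 * (N + 1 + M) - 1)%nat with (2 * N + S (2 * M))%nat by lia.
    replace (2 * (N + 1 + M) - 2)%nat with (2 * N + 2 * M)%nat by lia. lra.
Qed.

Lemma if_sum P N0 X : 0 <= X ->
  sm P (fun i => if Nat.eqb (N0 + 1 + i) 1 then X else 0) <= X.
Proof.
  intros HX. destruct P; [simpl; lra|].
  rewrite sm_shift.
  rewrite (sm_ext P _ (fun _ => 0)).
  - rewrite sm_zero. destruct (Nat.eqb _ _); lra.
  - intros i _. replace (Nat.eqb (N0 + 1 + S i) 1) with false; [reflexivity|].
    symmetry. apply Nat.eqb_neq. lia.
Qed.

Section Main.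
Variables (K : R -> R -> R) (n : nat) (Hn : (1 <= n)%nat).
Variables (T C1 alpha : R).
Hypothesis (hsym : cov_symmetric K) (hpsd : cov_psd K).
Hypothesis (hC1 : 0 < C1) (halpha : 1 < alpha /\ alpha <= 3/2).
Hypothesis (hi : cond_i K T C1) (hii : cond_ii K T C1 alpha).

Lemma sq_b a c j k : (1 <= a)%nat -> (a <= c)%nat -> (k - j <= c - a)%nat ->
  INR (c + 1) / INR n <= T ->
  beta K n a c ^ 2 <= 16 * C1 ^ 2 * / INR n / (INR (k - j) + 1) ^ 2.
Proof.
  intros Ha Hac Hkj HT.
  pose proof (beta_unif K n Hn T C1 alpha hsym hpsd hC1 halpha hi hii a c Ha Hac HT) as H.
  pose proof (INRn_pos n Hn) as Hn0.
  assert (Hq : sqrt (/ INR n) ^ 2 = / INR n).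
  { simpl. rewrite Rmult_1_r. apply sqrt_sqrt. left; apply Rinv_0_lt_compat; lra. }
  assert (Hq0 : 0 <= sqrt (/ INR n)) by apply sqrt_pos.
  assert (Hm : INR (k - j) <= INR (c - a)) by (apply le_INR; auto).
  assert (Hm0 : 0 <= INR (k - j)) by apply pos_INR.
  assert (H2 : 4 * C1 * sqrt (/ INR n) / (INR (c - a) + 1) <= 4 * C1 * sqrt (/ INR n) / (INR (k - j) + 1)).
  { unfold Rdiv. apply Rmult_le_compat_l; [nra|]. apply Rinv_le_contravar; lra. }
  assert (Habs : Rabs (beta K n a c) <= 4 * C1 * sqrt (/ INR n) / (INR (k - j) + 1)) by lra.
  rewrite <- pow2_abs.
  eapply Rle_trans. { apply pow_incr. split; [apply Rabs_pos| exact Habs]. }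
  unfold Rdiv. rewrite !Rpow_mult_distr. rewrite Hq.
  rewrite pow_inv. simpl. lra.
Qed.

Lemma summand_bound j k : (1 <= j)%nat -> (j < k)%nat -> INR (2 * k) / INR n <= T ->
  summand K n j k <= 64 * C1 ^ 2 * / INR n / (INR (k - j) + 1) ^ 2
     + (if Nat.eqb j 1 then beta K n 0 (2 * k - 1) ^ 2 + beta K n 0 (2 * k - 2) ^ 2 else 0).
Proof.
  intros Hj Hjk HT.
  assert (HT1 : INR (2 * k - 1 + 1) / INR n <= T) by (replace (2 * k - 1 + 1)%nat with (2 * k)%nat by lia; auto).
  assert (HT2 : INR (2 * k - 2 + 1) / INR n <= T).
  { eapply Rle_trans; [apply (tm_mono n Hn _ (2 * k)); lia| auto]. }
  set (B := 16 * C1 ^ 2 * / INR n / (INR (k - j) + 1) ^ 2).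
  assert (b1 : beta K n (2 * j - 1) (2 * k - 1) ^ 2 <= B) by (apply sq_b; auto; lia).
  assert (b2 : beta K n (2 * j - 1) (2 * k - 2) ^ 2 <= B) by (apply sq_b; auto; lia).
  assert (E : 64 * C1 ^ 2 * / INR n / (INR (k - j) + 1) ^ 2 = 4 * B) by (unfold B; unfold Rdiv; ring).
  rewrite E.
  unfold summand.
  pose proof (pow2_ge_0 (beta K n (2 * j - 1) (2 * k - 1))).
  pose proof (pow2_ge_0 (beta K n (2 * j - 1) (2 * k - 2))).
  pose proof (pow2_ge_0 (beta K n (2 * j - 2) (2 * k - 1))).
  pose proof (pow2_ge_0 (beta K n (2 * j - 2) (2 * k - 2))).
  assert (HB : 0 <= B) by (eapply Rle_trans; [apply pow2_ge_0| exact b1]).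
  destruct (Nat.eqb_spec j 1) as [Hj1|Hj1].
  - subst j. simpl (2 * 1 - 2)%nat in *.
    unfold Rabs; destruct (Rcase_abs _); lra.
  - assert (b3 : beta K n (2 * j - 2) (2 * k - 1) ^ 2 <= B) by (apply sq_b; auto; lia).
    assert (b4 : beta K n (2 * j - 2) (2 * k - 2) ^ 2 <= B) by (apply sq_b; auto; lia).
    unfold Rabs; destruct (Rcase_abs _); lra.
Qed.
End Main.

Section PartB.
Variables (K : R -> R -> R) (n : nat) (Hn : (1 <= n)%nat).
Variables (T C1 alpha : R).
Hypothesis (hT : 0 < T).
Hypothesis (hsym : cov_symmetric K) (hpsd : cov_psd K).
Hypothesis (hC1 : 0 < C1) (halpha : 1 < alpha /\ alpha <= 3/2).
Hypothesis (hi : cond_i K T C1) (hii : cond_ii K T C1 alpha).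

Lemma row_sum C0 L i : (1 <= C0)%nat -> INR (C0 + L) / INR n <= T -> (i < L)%nat ->
  sm L (fun j => Rabs (beta K n (C0 + i) (C0 + j))) <= 16 * C1 * sqrt T.
Proof.
  intros HC0 HT Hi. pose proof (INRn_pos n Hn) as Hn0.
  assert (Hq0 : 0 <= sqrt (/ INR n)) by apply sqrt_pos.
  apply Rle_trans with (sm L (fun j => 4 * C1 * sqrt (/ INR n) * / (INR (ndist i j) + 1))).
  { apply sm_le. intros j Hj.
    replace (ndist i j) with (ndist (C0 + i) (C0 + j)) by (unfold ndist; lia).
    apply (beta_gram K n Hn T C1 alpha hsym hpsd hC1 halpha hi hii); try lia;
      (eapply Rle_trans; [apply (tm_mono n Hn _ (C0 + L)); lia| exact HT]). }
  rewrite sm_scal.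
  pose proof (dist_sum L i Hi) as D. pose proof (harm_sqrt L) as Hh.
  assert (Hs : sqrt (/ INR n) * sqrt (INR L) <= sqrt T).
  { rewrite <- sqrt_mult_alt by (left; apply Rinv_0_lt_compat; lra).
    apply sqrt_le_1_alt.
    assert (INR L <= INR (C0 + L)) by (apply le_INR; lia).
    unfold Rdiv in HT. assert (0 < / INR n) by (apply Rinv_0_lt_compat; lra). nra. }
  assert (0 <= 4 * C1 * sqrt (/ INR n)) by nra.
  assert (H1 : sm L (fun j => / (INR (ndist i j) + 1)) <= 4 * sqrt (INR L)) by lra.
  apply Rle_trans with (4 * C1 * sqrt (/ INR n) * (4 * sqrt (INR L))).
  { apply Rmult_le_compat_l; auto. }
  nra.
Qed.

Lemma partB C0 L : (1 <= C0)%nat -> INR (C0 + L) / INR n <= T -> INR (0 + 1) / INR n <= T ->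
  sm L (fun i => beta K n 0 (C0 + i) ^ 2) <= 16 * C1 * sqrt T * (C1 * sqrt (/ INR n)).
Proof.
  intros HC0 HT HT0.
  assert (HsT : 0 < sqrt T) by (apply sqrt_lt_R0; lra).
  eapply Rle_trans.
  - apply (bessel_abs L (beta K n 0 0) (fun i => beta K n 0 (C0 + i)) (fun i j => beta K n (C0 + i) (C0 + j)) (16 * C1 * sqrt T)).
    + intros lam. apply (bessel_var K n Hn hsym hpsd C0 L lam).
    + nra.
    + intros i Hi. apply row_sum; auto.
    + intros j Hj. rewrite (sm_ext L _ (fun i => Rabs (beta K n (C0 + j) (C0 + i)))).
      * apply row_sum; auto.
      * intros i _. rewrite (beta_sym K n hsym). reflexivity.
  - apply Rmult_le_compat_l; [nra|]. apply (beta_diag_le K n Hn T C1 hi 0 HT0).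
Qed.
End PartB.

Lemma nfloor_spec x : 0 <= x -> INR (nfloor x) <= x /\ x - 1 < INR (nfloor x).
Proof.
  intros Hx. unfold nfloor. destruct (base_Int_part x) as [H1 H2].
  assert (Hz : (0 <= Int_part x)%Z).
  { apply le_IZR. assert (-1 < IZR (Int_part x)) by lra.
    destruct (Z_lt_le_dec (Int_part x) 0) as [Hl|Hl]; [|apply IZR_le in Hl; lra].
    assert (Int_part x <= -1)%Z by lia. apply IZR_le in H0. lra. }
  rewrite INR_IZR_INZ, Z2Nat.id by exact Hz. lra.
Qed.

Lemma nfloor_mono x y : 0 <= x -> x <= y -> (nfloor x <= nfloor y)%nat.
Proof.
  intros Hx Hxy. destruct (nfloor_spec x Hx) as [A1 A2]. destruct (nfloor_spec y ltac:(lra)) as [B1 B2].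
  destruct (Nat.le_gt_cases (nfloor x) (nfloor y)) as [H|H]; auto.
  assert (H3 : (S (nfloor y) <= nfloor x)%nat) by lia. apply le_INR in H3. rewrite S_INR in H3. lra.
Qed.

Lemma div_le a x T : 0 < a -> x <= a * T -> x / a <= T.
Proof.
  intros Ha H. apply (Rmult_le_reg_l a); auto. unfold Rdiv.
  rewrite <- Rmult_assoc, (Rmult_comm a x), Rmult_assoc, Rinv_r by lra. lra.
Qed.

Lemma s_sqrt n T : 0 < INR n -> 0 <= T -> / INR n * sqrt (INR n * T) = sqrt (/ INR n) * sqrt T.
Proof.
  intros Hn HT. rewrite sqrt_mult_alt by lra. rewrite sqrt_inv.
  assert (0 < sqrt (INR n)) by (apply sqrt_lt_R0; lra).
  replace (/ INR n) with (/ (sqrt (INR n) * sqrt (INR n))) by (rewrite sqrt_sqrt; lra).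
  field. lra.
Qed.

Section Bound.
Variables (K : R -> R -> R) (T : R) (hT : 0 < T).
Variables (C1 alpha : R).
Hypothesis (hsym : cov_symmetric K) (hpsd : cov_psd K).
Hypothesis (hC1 : 0 < C1) (halpha : 1 < alpha /\ alpha <= 3/2).
Hypothesis (hi : cond_i K T C1) (hii : cond_ii K T C1 alpha).
Variables (t0 t1 t2 t3 : R).
Hypotheses (h01 : 0 <= t0) (h1 : t0 < t1) (h2 : t1 <= t2) (h3 : t2 < t3) (h4 : t3 <= T).

Lemma main_bound n : (1 <= n)%nat -> 4 <= INR n * t2 ->
  0 <= double_sum K t0 t1 t2 t3 n <= 272 * C1 ^ 2 * sqrt T * sqrt (/ INR n).
Proof.
  intros Hn Hn2. pose proof (INRn_pos n Hn) as Hn0.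
  set (N0 := nfloor (INR n * t0 / 2)). set (N1 := nfloor (INR n * t1 / 2)).
  set (N2 := nfloor (INR n * t2 / 2)). set (N3 := nfloor (INR n * t3 / 2)).
  assert (Hx : forall t, 0 <= t -> 0 <= INR n * t / 2) by (intros; apply Rmult_le_pos; [apply Rmult_le_pos|]; lra).
  assert (H12 : (N1 <= N2)%nat) by (apply nfloor_mono; [apply Hx; lra| apply Rmult_le_compat_r; [lra| apply Rmult_le_compat_l; lra]]).
  assert (H23 : (N2 <= N3)%nat) by (apply nfloor_mono; [apply Hx; lra| apply Rmult_le_compat_r; [lra| apply Rmult_le_compat_l; lra]]).
  destruct (nfloor_spec (INR n * t3 / 2)) as [F3 _]; [apply Hx; lra|]. fold N3 in F3.
  destruct (nfloor_spec (INR n * t2 / 2)) as [_ F2]; [apply Hx; lra|]. fold N2 in F2.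
  assert (HN2 : (1 <= N2)%nat).
  { destruct (Nat.le_gt_cases 1 N2) as [H|H]; auto.
    assert (N2 = 0%nat) by lia. rewrite H0 in F2. simpl in F2. lra. }
  assert (HnT : INR n * t3 <= INR n * T) by (apply Rmult_le_compat_l; lra).
  assert (HN3 : 2 * INR N3 <= INR n * T) by lra.
  assert (HN3' : forall m, (m <= 2 * N3)%nat -> INR m / INR n <= T).
  { intros m Hm. apply div_le; auto. apply le_INR in Hm. rewrite mult_INR in Hm. simpl in Hm. lra. }
  set (P := (N1 - N0)%nat). set (M := (N3 - N2)%nat).
  assert (E : double_sum K t0 t1 t2 t3 n =
     sm P (fun i => sm M (fun l => summand K n (N0 + 1 + i) (N2 + 1 + l)))).
  { unfold double_sum, sum_range. fold N0 N1 N2 N3.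
    rewrite sum_from_sm. replace (S N1 - (N0 + 1))%nat with P by (unfold P; lia).
    apply sm_ext. intros i _. rewrite sum_from_sm.
    replace (S N3 - (N2 + 1))%nat with M by (unfold M; lia). reflexivity. }
  rewrite E. split.
  { apply sm_nonneg. intros i _. apply sm_nonneg. intros l _. unfold summand. apply Rabs_pos. }
  set (s := / INR n).
  assert (Hs : 0 < s) by (apply Rinv_0_lt_compat; lra).
  set (X := sm M (fun l => beta K n 0 (2 * (N2 + 1 + l) - 1) ^ 2 + beta K n 0 (2 * (N2 + 1 + l) - 2) ^ 2)).
  eapply Rle_trans.
  { apply sm_le. intros i Hi. apply sm_le. intros l Hl.
    apply (summand_bound K n Hn T C1 alpha hsym hpsd hC1 halpha hi hii); try lia.
    apply HN3'. lia. }
  rewrite (sm_ext P _ (fun i => sm M (fun l => 64 * C1 ^ 2 * s * / ((INR (N2 - (N0 + i)) + 1) + INR l) ^ 2)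
      + (if Nat.eqb (N0 + 1 + i) 1 then X else 0))).
  2:{ intros i Hi. rewrite sm_plus. f_equal.
      - apply sm_ext. intros l _. unfold Rdiv. f_equal. f_equal. f_equal.
        replace (N2 + 1 + l - (N0 + 1 + i))%nat with (N2 - (N0 + i) + l)%nat by lia.
        rewrite plus_INR. ring.
      - destruct (Nat.eqb _ _); [reflexivity| apply sm_zero]. }
  rewrite sm_plus.
  assert (A : sm P (fun i => sm M (fun l => 64 * C1 ^ 2 * s * / ((INR (N2 - (N0 + i)) + 1) + INR l) ^ 2))
     <= 256 * C1 ^ 2 * sqrt T * sqrt s).
  { apply Rle_trans with (sm P (fun i => 128 * C1 ^ 2 * s * / (INR (N2 - (N0 + i)) + 1))).
    { apply sm_le. intros i Hi. rewrite sm_scal.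
      assert (0 <= INR (N2 - (N0 + i))) by apply pos_INR.
      pose proof (sq_tele M (INR (N2 - (N0 + i)) + 1) ltac:(lra)).
      assert (0 <= 64 * C1 ^ 2 * s) by (pose proof (pow2_ge_0 C1); nra).
      replace (128 * C1 ^ 2 * s * / (INR (N2 - (N0 + i)) + 1)) with
        (64 * C1 ^ 2 * s * (2 / (INR (N2 - (N0 + i)) + 1))) by (unfold Rdiv; ring).
      apply Rmult_le_compat_l; auto. }
    rewrite sm_scal. rewrite sm_rev.
    assert (Hh : sm P (fun i => / (INR (N2 - (N0 + (P - 1 - i))) + 1)) <= 2 * sqrt (INR n * T)).
    { eapply Rle_trans; [|eapply Rle_trans; [apply (harm_sqrt P)|]].
      - apply sm_le. intros i Hi. apply Rinv_le_contravar; [pose proof (pos_INR i); lra|].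
        apply Rplus_le_compat_r, le_INR. unfold P in *. lia.
      - apply Rmult_le_compat_l; [lra|]. apply sqrt_le_1_alt.
        assert (INR P <= INR N3) by (apply le_INR; unfold P; lia).
        pose proof (pos_INR N3). lra. }
    assert (Hss : s * sqrt (INR n * T) = sqrt s * sqrt T) by (unfold s; apply s_sqrt; lra).
    assert (0 <= 128 * C1 ^ 2 * s) by (pose proof (pow2_ge_0 C1); nra).
    apply Rle_trans with (128 * C1 ^ 2 * s * (2 * sqrt (INR n * T))).
    - apply Rmult_le_compat_l; auto.
    - replace (128 * C1 ^ 2 * s * (2 * sqrt (INR n * T))) with (256 * C1 ^ 2 * (s * sqrt (INR n * T))) by ring.
      rewrite Hss. lra. }
  assert (HX0 : 0 <= X) by (apply sm_nonneg; intros; pose proof (pow2_ge_0 (beta K n 0 (2 * (N2 + 1 + i) - 1))); pose proof (pow2_ge_0 (beta K n 0 (2 * (N2 + 1 + i) - 2))); lra).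
  assert (B1 : sm P (fun i => if Nat.eqb (N0 + 1 + i) 1 then X else 0) <= X) by (apply if_sum; auto).
  assert (B2 : X = sm (2 * M) (fun i => beta K n 0 (2 * N2 + i) ^ 2)).
  { unfold X. apply (regroup (fun c => beta K n 0 c ^ 2)). }
  assert (B3 : X <= 16 * C1 * sqrt T * (C1 * sqrt s)).
  { rewrite B2. apply (partB K n Hn T C1 alpha hT hsym hpsd hC1 halpha hi hii); try lia.
    - apply HN3'. unfold M. lia.
    - apply HN3'. lia. }
  lra.
Qed.
End Bound.

Theorem lemma6p1 (K : R -> R -> R) (T : R) (hT : 0 < T)
  (hG : gaussian_cov K)
  (C1 C3 alpha gamma : R) (hC1 : 0 < C1) (hC3 : 0 < C3)
  (halpha : 1 < alpha /\ alpha <= 3/2) (hgamma : 0 < gamma)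
  (hi : cond_i K T C1) (hii : cond_ii K T C1 alpha) (hiv : cond_iv K T C3 gamma)
  (t0 t1 t2 t3 : R) (h01 : 0 <= t0) (h1 : t0 < t1) (h2 : t1 <= t2) (h3 : t2 < t3)
  (h4 : t3 <= T) :
  Un_cv (double_sum K t0 t1 t2 t3) 0.
Proof.
  destruct hG as [hsym [hpsd _]].
  intros eps Heps.
  set (Mc := 272 * C1 ^ 2 * sqrt T).
  assert (HMc : 0 < Mc).
  { unfold Mc. assert (0 < sqrt T) by (apply sqrt_lt_R0; lra).
    assert (0 < C1 ^ 2) by (apply pow_lt; lra). nra. }
  assert (Ht2 : 0 < t2) by lra.
  set (x := Rmax (4 / t2) ((Mc / eps) ^ 2)).
  assert (Hx : 0 <= x).
  { unfold x. eapply Rle_trans; [|apply Rmax_l]. left. apply Rdiv_lt_0_compat; lra. }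
  exists (nfloor x + 1)%nat. intros n Hn.
  destruct (nfloor_spec x Hx) as [_ Hf].
  assert (Hnx : x < INR n).
  { apply le_INR in Hn. rewrite plus_INR in Hn. simpl in Hn. lra. }
  assert (Hn1 : (1 <= n)%nat) by lia.
  assert (Hn0 : 0 < INR n) by (apply lt_0_INR; lia).
  assert (H4 : 4 <= INR n * t2).
  { assert (4 / t2 < INR n) by (eapply Rle_lt_trans; [apply Rmax_l| exact Hnx]).
    apply Rlt_le. apply (Rmult_lt_compat_r t2) in H; [|lra].
    unfold Rdiv in H. rewrite Rmult_assoc, Rinv_l in H by lra. lra. }
  destruct (main_bound K T hT C1 alpha hsym hpsd hC1 halpha hi hii t0 t1 t2 t3 h01 h1 h2 h3 h4 n Hn1 H4) as [L U].
  unfold R_dist. rewrite Rminus_0_r, Rabs_right by lra.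
  fold Mc in U.
  assert (Hq : sqrt (/ INR n) < eps / Mc).
  { assert (Hme : 0 < eps / Mc) by (apply Rdiv_lt_0_compat; lra).
    rewrite <- (sqrt_pow2 (eps / Mc)) by lra.
    apply sqrt_lt_1_alt. split; [left; apply Rinv_0_lt_compat; lra|].
    assert ((Mc / eps) ^ 2 < INR n) by (eapply Rle_lt_trans; [apply Rmax_r| exact Hnx]).
    assert (Hp : 0 < (Mc / eps) ^ 2) by (apply pow_lt, Rdiv_lt_0_compat; lra).
    replace ((eps / Mc) ^ 2) with (/ ((Mc / eps) ^ 2)) by (field; lra).
    apply Rinv_lt_contravar; [nra| lra]. }
  apply Rle_lt_trans with (Mc * sqrt (/ INR n)); [exact U|].
  apply (Rmult_lt_compat_l Mc) in Hq; [|lra].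
  replace (Mc * (eps / Mc)) with eps in Hq by (field; lra). lra.
Qed.
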